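(* Let $\mu$ be a finite signed Borel measure on a Borel set $C\subseteq\mathbb{R}$, let $\alpha\in\mathbb{R}$ and let $g$ be a complex-valued function on $C$; for each $z$ fix a value $g(z)^\alpha\in\mathbb{C}$ and put $r(k,z)=g(z)^{\alpha k}:=(g(z)^\alpha)^k$. Suppose $\phi:\mathbb{N}\cup\{0\}\to\mathbb{C}$ satisfies $\phi(k)=\int_C r(k,z)\,\mu(dz)$ for all $k\in\mathbb{N}\cup\{0\}$. Let $\gamma,\sigma:[a,b]\to V$ be continuous paths of bounded variation and set $a_k(s,t)=\langle S(\gamma)^k_{a,s},S(\sigma)^k_{a,t}\rangle_k$. Assume that for every $(s,t)\in[a,b]^2$: (1) $\int_C|r(k,z)|\,|\mu|(dz)<\infty$ for every $k$, and (2) the series $\sum_k a_k(s,t)\int_C|r(k,z)|\,|\mu|(dz)$ converges absolutely. Then for every $(s,t)\in[a,b]^2$, \[ \langle S(\gamma)_{a,s},S(\sigma)_{a,t}\rangle_\phi=\int_C K^{g(z)^\alpha\gamma,\sigma}(s,t)\,\mu(dz). \]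
   Context: $V$ is a finite-dimensional real inner product space, $\langle\cdot,\cdot\rangle_k$ the induced Hilbert–Schmidt inner product on $V^{\otimes k}$. Signature: $S(\gamma)^0=1$, $S(\gamma)^k_{s,t}=\int_{s<u_1<\dots<u_k<t}d\gamma_{u_1}\otimes\cdots\otimes d\gamma_{u_k}$. For complex $\phi$, $\langle S(\gamma)_{a,s},S(\sigma)_{a,t}\rangle_\phi:=\sum_{k\ge0}\phi(k)a_k(s,t)$. For $w\in\mathbb{C}$, the (original) signature kernel of the rescaled path is $K^{w\gamma,\sigma}(s,t):=\sum_{k\ge0}w^k a_k(s,t)$. $|\mu|$ denotes the total variation measure. *)

(* Defs.v *)
From HB Require Import structures.
From mathcomp Require Import all_boot all_order all_algebra.
From mathcomp Require Import all_classical all_reals all_analysis.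
From mathcomp Require Import complex.
Set Implicit Arguments. Unset Strict Implicit. Unset Printing Implicit Defensive.
Import Order.TTheory GRing.Theory Num.Theory.
Import numFieldNormedType.Exports.
Local Open Scope classical_set_scope.
Local Open Scope ring_scope.

(* Riemann–Stieltjes integral  \int_a^b f(u) dg(u)  (limit of Riemann–       *)
(* Stieltjes sums over tagged partitions a = x_0 <= ... <= x_n = b as the     *)
(* mesh tends to 0); RSint returns this limit (and 0 if it does not exist).  *)
Section RiemannStieltjes.
Variable R : realType.

Definition is_RS (f g : R -> R) (a b I : R) : Prop :=
  forall e : R, 0 < e -> exists2 delta : R, 0 < delta &
    forall (n : nat) (x xi : nat -> R),
      x 0%N = a -> x n = b ->
      (forall i : nat, (i < n)%N ->
         (x i <= xi i <= x i.+1) /\ x i.+1 - x i < delta) ->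
      `| \sum_(i < n) f (xi i) * (g (x i.+1) - g (x i)) - I | < e.

Definition RSint (f g : R -> R) (a b : R) : R :=
  xget 0 [set I | is_RS f g a b I].

End RiemannStieltjes.

(* Signatures of paths in V = R^d (standard inner product).                 *)
(* sigcoef gamma a w t = coefficient of e_{w_1} (x) ... (x) e_{w_k} in       *)
(*   S(gamma)^k_{a,t} = \int_{a<u_1<...<u_k<t} dgamma_{u_1} (x)...(x) dgamma_{u_k},*)
(* computed as the iterated Riemann–Stieltjes integral                        *)
(*   S^{k}_{a,t}(w_1..w_k) = \int_a^t S^{k-1}_{a,u}(w_1..w_{k-1}) dgamma^{w_k}_u. *)
Section Signature.
Variables (R : realType) (d : nat).

Fixpoint sig_rev (gamma : R -> 'rV[R]_d) (a : R) (w : seq 'I_d) (t : R) : R :=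
  match w with
  | [::] => 1
  | i :: w' => RSint (sig_rev gamma a w') (fun u => gamma u ord0 i) a t
  end.

Definition sigcoef (gamma : R -> 'rV[R]_d) (a : R) (w : seq 'I_d) (t : R) : R :=
  sig_rev gamma a (rev w) t.

(* a_k(s,t) = < S(gamma)^k_{a,s}, S(sigma)^k_{a,t} >_k  (Hilbert–Schmidt)   *)
Definition sig_dot (gamma sigma : R -> 'rV[R]_d) (a : R) (k : nat) (s t : R) : R :=
  \sum_(w : k.-tuple 'I_d) sigcoef gamma a w s * sigcoef sigma a w t.

Definition csum (u : nat -> R[i]) : R[i] :=
  ((limn (fun n => \sum_(0 <= k < n) complex.Re (u k))) +i*
   (limn (fun n => \sum_(0 <= k < n) complex.Im (u k))))%C.

Definition phi_kernel (phi : nat -> R[i]) (gamma sigma : R -> 'rV[R]_d)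
  (a s t : R) : R[i] :=
  csum (fun k => phi k * (sig_dot gamma sigma a k s t)%:C%C).

Definition sigK (w : R[i]) (gamma sigma : R -> 'rV[R]_d) (a s t : R) : R[i] :=
  csum (fun k => w ^+ k * (sig_dot gamma sigma a k s t)%:C%C).

End Signature.

(* Integration against a finite signed measure (charge): Jordan decomposition*)
(* obtained from a (chosen) Hahn decomposition; |mu| = charge_variation.     *)
Section ChargeIntegral.
Context d (T : measurableType d) (R : realType).

Lemma ex_hahn_pair (nu : {charge set T -> \bar R}) :
  exists PN : set T * set T, hahn_decomposition nu PN.1 PN.2.
Proof. by have [P [N PN]] := Hahn_decomposition nu; exists (P, N). Qed.

Definition hahn_pair (nu : {charge set T -> \bar R}) : set T * set T :=
  projT1 (cid (ex_hahn_pair nu)).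

Definition hahn_pairP (nu : {charge set T -> \bar R}) :
  hahn_decomposition nu (hahn_pair nu).1 (hahn_pair nu).2 :=
  projT2 (cid (ex_hahn_pair nu)).

Definition cpos (nu : {charge set T -> \bar R}) := jordan_pos (hahn_pairP nu).
Definition cneg (nu : {charge set T -> \bar R}) := jordan_neg (hahn_pairP nu).
Definition cvar (nu : {charge set T -> \bar R}) := charge_variation (hahn_pairP nu).

Definition charge_int (nu : {charge set T -> \bar R}) (D : set T) (f : T -> R)
  : \bar R :=
  (\int[cpos nu]_(x in D) (f x)%:E - \int[cneg nu]_(x in D) (f x)%:E)%E.

Definition charge_cint (nu : {charge set T -> \bar R}) (D : set T) (f : T -> R[i])
  : R[i] :=
  (fine (charge_int nu D (fun x => complex.Re (f x))) +i*
   fine (charge_int nu D (fun x => complex.Im (f x))))%C.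

Definition charge_absint (nu : {charge set T -> \bar R}) (D : set T) (f : T -> R)
  : \bar R := \int[cvar nu]_(x in D) (f x)%:E.

End ChargeIntegral.

(* Main.v *)
Require Import Defs.
From HB Require Import structures.
From mathcomp Require Import all_boot all_order all_algebra.
From mathcomp Require Import all_classical all_reals all_analysis.
From mathcomp Require Import complex measurable_realfun ring lra.
Import Order.TTheory GRing.Theory Num.Theory.
Import numFieldNormedType.Exports.
Local Open Scope classical_set_scope.
Local Open Scope ring_scope.

Section Aux.
Variable R : realType.

Lemma cvgn_cauchyP (u : R^nat) : cvgn u <->
  forall m : nat, exists N : nat, forall p q, (N <= p)%N -> (N <= q)%N ->
    `|u p - u q| < m.+1%:R^-1.
Proof.
split.
  move=> /cvg_ex [l /cvgrPdist_lt ul] m.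
  have e2 : 0 < m.+1%:R^-1 / 2 :> R by rewrite divr_gt0 // invr_gt0 ltr0n.
  have [N _ HN] := ul _ e2.
  exists N => p q Np Nq.
  have := HN p Np; have := HN q Nq => /= h1 h2.
  rewrite (_ : u p - u q = (l - u q) - (l - u p)); last by ring.
  rewrite (le_lt_trans (ler_normB _ _)) // [X in _ < X](splitr (m.+1%:R^-1)).
  by rewrite ltrD.
move=> H; apply/cauchy_cvgP/cauchy_exP => e e0.
have [N HN] := H (Num.Def.truncn (e^-1)).
exists (u N); exists N => // n /= Nn.
rewrite /ball /= (lt_trans (HN N n (leqnn N) Nn)) //.
rewrite -[X in _ < X](invrK e) ltf_pV2 ?posrE ?ltr0n ?invr_gt0 //.
exact: truncnS_gt.
Qed.


Lemma measurable_limn d (T : measurableType d) (D : set T) (S : (T -> R)^nat) :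
  measurable D -> (forall n, measurable_fun D (S n)) ->
  measurable_fun D (fun z => limn (S ^~ z)).
Proof.
move=> mD mS.
pose A m N p q := D `&` [set z | (N <= p)%N -> (N <= q)%N ->
   `|S p z - S q z| < m.+1%:R^-1].
pose E := \bigcap_m \bigcup_N \bigcap_p \bigcap_q A m N p q.
have mA m N p q : measurable (A m N p q).
  have [Np|Np] := boolP (N <= p)%N; have [Nq|Nq] := boolP (N <= q)%N.
  - have mf : measurable_fun D (fun z => `|S p z - S q z|).
      exact: (measurableT_comp (@normr_measurable R setT) (measurable_funB (mS p) (mS q))).
    rewrite (_ : A m N p q = D `&` (fun z => `|S p z - S q z|) @^-1` `]-oo, m.+1%:R^-1[).
      exact: mf mD _ (measurable_itv _).
    apply/seteqP; split => z /=.
      by move=> [Dz H]; split => //; rewrite in_itv /=; apply: H.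
    by move=> [Dz]; rewrite in_itv /= => H; split => // _ _.
  1-3: suff -> : A m N p q = D by [].
  1-3: apply/seteqP; split => z /=; [by case|].
  1-3: by move=> Dz; split => // h1 h2; rewrite ?h1 ?h2 in Np Nq.
have mE : measurable E.
  apply: bigcapT_measurable => m; apply: bigcupT_measurable => N.
  by apply: bigcapT_measurable => p; apply: bigcapT_measurable => q.
have EE : E = D `&` [set z | cvgn (S ^~ z)].
  apply/seteqP; split => z /=.
    move=> Hz; split.
      by have [N _ /(_ 0%N I) /(_ 0%N I) []] := Hz 0%N I.
    apply/cvgn_cauchyP => m; have [N _ HN] := Hz m I.
    by exists N => p q Np Nq; have [_ ] := HN p I q I; apply.
  move=> [Dz /cvgn_cauchyP Hz] m _; have [N HN] := Hz m.
  by exists N => // p _ q _; split => //; apply: HN.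
have mDC : measurable (D `&` [set z | cvgn (S ^~ z)]) by rewrite -EE.
rewrite -(setDUK (@subIsetl _ D [set z | cvgn (S ^~ z)])).
apply/measurable_funU => //; first exact: measurableD.
split.
  apply: (@measurable_fun_cvg _ _ _ _ S).
    by move=> n; apply: (measurable_funS mD _ (mS n)); exact: subIsetl.
  by move=> z [_ /= cz].
apply: (eq_measurable_fun (cst point)); last exact: measurable_cst.
move=> z; rewrite inE => -[Dz /= nc]; rewrite dvgP //.
by move=> cz; apply: nc.
Qed.


Local Open Scope ereal_scope.

Lemma single_dct d (T : measurableType d) (m : {measure set T -> \bar R})
  (D : set T) (h B : nat -> T -> R) (c : nat -> R) :
  measurable D ->
  (forall k, measurable_fun D (h k)) ->
  (forall k, measurable_fun D (B k)) ->
  (forall k z, D z -> (`|h k z| <= B k z)%R) ->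
  (forall k, \int[m]_(z in D) (B k z)%:E < +oo) ->
  \sum_(0 <= k <oo) ((`|c k|)%:E * \int[m]_(z in D) (B k z)%:E) < +oo ->
  (forall k, m.-integrable D (EFin \o h k)) /\
  m.-integrable D (EFin \o (fun z => limn (fun n => (\sum_(0 <= k < n) h k z * c k)%R))) /\
  ((fun n => \sum_(0 <= k < n) fine (\int[m]_(z in D) (h k z)%:E) * c k)%R @ \oo -->
     fine (\int[m]_(z in D) (limn (fun n => (\sum_(0 <= k < n) h k z * c k)%R))%:E)).
Proof.
move=> mD mh mB hB iB sB.
have B0 k z : D z -> (0 <= B k z)%R by move=> Dz; exact: le_trans (normr_ge0 _) (hB k z Dz).
have intB k : m.-integrable D (EFin \o B k).
  apply/integrableP; split; first exact/measurable_EFinP.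
  rewrite (eq_integral (fun z => (B k z)%:E)) //.
  by move=> z /[!inE] Dz /=; rewrite ger0_norm // B0.
have inth k : m.-integrable D (EFin \o h k).
  apply: (le_integrable mD _ _ (intB k)); first exact/measurable_EFinP.
  move=> z Dz /=; rewrite lee_fin (ger0_norm (B0 _ _ Dz)); exact: hB.
split => //.
pose G z := \sum_(0 <= k <oo) ((`|c k| * B k z)%R%:E).
have G0 z : D z -> 0 <= G z.
  by move=> Dz; apply: nneseries_ge0 => k _ _; rewrite lee_fin mulr_ge0 // B0.
have mG : measurable_fun D G.
  apply: (@ge0_emeasurable_sum _ _ _ _ (fun k z => (`|c k| * B k z)%R%:E) predT).
    by move=> k z Dz _; rewrite lee_fin mulr_ge0 // B0.
  move=> k _; apply/measurable_EFinP.
  exact: (measurable_funM (measurable_cst _) (mB k)).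
have iG : m.-integrable D G.
  apply/integrableP; split => //.
  rewrite (eq_integral G); last first.
    by move=> z /[!inE] Dz; rewrite gee0_abs // G0.
  rewrite integral_nneseries //; last first.
  - by move=> k z Dz; rewrite lee_fin mulr_ge0 // B0.
  - by move=> k; apply/measurable_EFinP; exact: (measurable_funM (measurable_cst _) (mB k)).
  apply: le_lt_trans sB; rewrite le_eqVlt; apply/orP; left; apply/eqP.
  apply: eq_eseriesr => k _.
  under eq_integral do rewrite EFinM.
  by rewrite ge0_integralZl_EFin //; [move=> z Dz; rewrite lee_fin B0|exact/measurable_EFinP].
pose S n z := (\sum_(0 <= k < n) h k z * c k)%R.
pose F z := limn (S ^~ z).
have mS n : measurable_fun D (S n).
  by apply: measurable_sum => k; exact: (measurable_funM (mh k) (measurable_cst _)).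
have mF : measurable_fun D F := @measurable_limn d T D S mD mS.
have mS' n : measurable_fun D (EFin \o S n) by exact/measurable_EFinP.
have mF' : measurable_fun D (EFin \o F) by exact/measurable_EFinP.
have fF : {ae m, forall x, D x -> (fun n => EFin \o S n) ^~ x @ \oo --> (EFin \o F) x}.
  apply: filterS (integrable_ae mD iG) => z Gz Dz.
  have Gfin := Gz Dz.
  have cS : cvgn (S ^~ z).
    apply: normed_cvg.
    apply: (@series_le_cvg _ _ (fun k => `|c k| * B k z)%R).
    - by move=> k; exact: normr_ge0.
    - by move=> k; rewrite mulr_ge0 // B0.
    - by move=> k; rewrite /= normrM mulrC ler_wpM2l // hB.
    apply: nnseries_is_cvg; first by move=> k; rewrite mulr_ge0 // B0.
    by rewrite -ge0_fin_numE ?G0.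
  apply/fine_cvgP; split; first exact: nearW.
  exact: cS.
have fG : {ae m, forall x n, D x -> `|(EFin \o S n) x| <= G x}.
  apply: aeW => z n Dz /=.
  apply: (@le_trans _ _ (\sum_(0 <= k < n) ((`|c k| * B k z)%R%:E))).
    rewrite sumEFin lee_fin; apply: le_trans (ler_norm_sum _ _ _) _.
    by apply: ler_sum => k _; rewrite normrM mulrC ler_wpM2l // hB.
  by apply: nneseries_lim_ge => k _; rewrite lee_fin mulr_ge0 // B0.
have [iF _ cv] := dominated_convergence mD mS' mF' fF iG fG.
split; first exact: iF.
have fin k := integrable_fin_num mD (inth k).
have E n : \int[m]_(x in D) (EFin \o S n) x =
    ((\sum_(0 <= k < n) fine (\int[m]_(z in D) (h k z)%:E) * c k)%R)%:E.
  rewrite /S /=.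
  under eq_integral do rewrite -sumEFin.
  rewrite (integral_sum mD (f := fun k x => (h k x * c k)%:E)); last first.
    move=> k; under eq_fun do rewrite EFinM.
    exact: (integrableZr mD (c k) (inth k)).
  rewrite -sumEFin; apply: eq_bigr => k _.
  under eq_integral do rewrite EFinM.
  rewrite integralZr //; last exact: inth k.
  by rewrite -[in LHS](fineK (fin k)).

move: cv; rewrite -(fineK (integrable_fin_num mD iF)).
under eq_fun do rewrite E.
by move/fine_cvgP => [_ ].
Qed.


Lemma charge_series d (T : measurableType d) (mu : {charge set T -> \bar R})
  (C : set T) (h B : nat -> T -> R) (c : nat -> R) :
  measurable C ->
  (forall k, measurable_fun C (h k)) ->
  (forall k, measurable_fun C (B k)) ->
  (forall k z, C z -> (`|h k z| <= B k z)%R) ->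
  (forall k, charge_absint mu C (B k) < +oo) ->
  \sum_(0 <= k <oo) ((`|c k|)%:E * charge_absint mu C (B k)) < +oo ->
  limn (fun n => \sum_(0 <= k < n) fine (charge_int mu C (h k)) * c k)%R =
  fine (charge_int mu C (fun z => limn (fun n => \sum_(0 <= k < n) h k z * c k)%R)).
Proof.
move=> mC mh mB hB iB sB.
have B0 k z : C z -> (0 <= B k z)%R by move=> Dz; exact: le_trans (normr_ge0 _) (hB k z Dz).
have cvE k : charge_absint mu C (B k) =
    \int[cpos mu]_(z in C) (B k z)%:E + \int[cneg mu]_(z in C) (B k z)%:E.
  rewrite /charge_absint (eq_measure_integral (measure_add (cpos mu) (cneg mu))).
    rewrite ge0_integral_measure_add //; first by move=> z Cz; rewrite lee_fin B0.
    exact/measurable_EFinP.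
  move=> A mA _; symmetry; exact: (measure_addE (cpos mu) (cneg mu) A).
have leP k : \int[cpos mu]_(z in C) (B k z)%:E <= charge_absint mu C (B k).
  by rewrite cvE leeDl // integral_ge0 // => z Cz; rewrite lee_fin B0.
have leN k : \int[cneg mu]_(z in C) (B k z)%:E <= charge_absint mu C (B k).
  by rewrite cvE leeDr // integral_ge0 // => z Cz; rewrite lee_fin B0.
have sP : \sum_(0 <= k <oo) ((`|c k|)%:E * \int[cpos mu]_(z in C) (B k z)%:E) < +oo.
  apply: le_lt_trans sB; apply: lee_nneseries => k _.
    by rewrite mule_ge0 // integral_ge0 // => z Cz; rewrite lee_fin B0.
  by apply: lee_wpmul2l; [rewrite lee_fin|exact: leP].
have sN : \sum_(0 <= k <oo) ((`|c k|)%:E * \int[cneg mu]_(z in C) (B k z)%:E) < +oo.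
  apply: le_lt_trans sB; apply: lee_nneseries => k _.
    by rewrite mule_ge0 // integral_ge0 // => z Cz; rewrite lee_fin B0.
  by apply: lee_wpmul2l; [rewrite lee_fin|exact: leN].
have [ihP [iFP cvP]] := @single_dct d T (cpos mu) C h B c mC mh mB hB
  (fun k => le_lt_trans (leP k) (iB k)) sP.
have [ihN [iFN cvN]] := @single_dct d T (cneg mu) C h B c mC mh mB hB
  (fun k => le_lt_trans (leN k) (iB k)) sN.
rewrite /charge_int fineB; [|exact: integrable_fin_num iFP|exact: integrable_fin_num iFN].
rewrite (_ : (fun n => _) = (fun n => (\sum_(0 <= k < n) fine (\int[cpos mu]_(z in C) (h k z)%:E) * c k
   - \sum_(0 <= k < n) fine (\int[cneg mu]_(z in C) (h k z)%:E) * c k)%R)).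
  by apply: cvg_lim => //; exact: cvgB cvP cvN.
apply: funext => n; rewrite -sumrB; apply: eq_bigr => k _.
rewrite fineB ?mulrBl //.
  by move: (ihP k) => /(integrable_fin_num mC).
by move: (ihN k) => /(integrable_fin_num mC).
Qed.

Local Close Scope ereal_scope.

Lemma Re_mulC (w : R[i]) (r : R) : complex.Re (w * r%:C%C) = complex.Re w * r.
Proof. by case: w => x y /=; rewrite mulr0 subr0. Qed.

Lemma Im_mulC (w : R[i]) (r : R) : complex.Im (w * r%:C%C) = complex.Im w * r.
Proof. by case: w => x y /=; rewrite mulr0 add0r. Qed.

Lemma Re_le_normc (w : R[i]) : `|complex.Re w| <= ComplexField.Normc.normc w.
Proof.
case: w => x y /=; rewrite -sqrtr_sqr ler_wsqrtr // lerDl; exact: sqr_ge0.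
Qed.

Lemma Im_le_normc (w : R[i]) : `|complex.Im w| <= ComplexField.Normc.normc w.
Proof.
case: w => x y /=; rewrite -sqrtr_sqr ler_wsqrtr // lerDr; exact: sqr_ge0.
Qed.

Lemma meas_pow (C : set R) (g : R -> R[i]) : measurable C ->
  measurable_fun C (fun z => complex.Re (g z)) ->
  measurable_fun C (fun z => complex.Im (g z)) ->
  forall k, measurable_fun C (fun z => complex.Re (g z ^+ k)) /\
            measurable_fun C (fun z => complex.Im (g z ^+ k)).
Proof.
move=> mC mRe mIm; elim=> [|k [IHr IHi]].
  split.
    rewrite (_ : (fun z => _) = cst 1); first exact: measurable_cst.
    by apply: funext => z; rewrite expr0.
  rewrite (_ : (fun z => _) = cst 0); first exact: measurable_cst.
  by apply: funext => z; rewrite expr0.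
split.
  rewrite (_ : (fun z => _) = (fun z => complex.Re (g z)) \* (fun z => complex.Re (g z ^+ k))
     \- (fun z => complex.Im (g z)) \* (fun z => complex.Im (g z ^+ k))).
    by apply: measurable_funB; apply: measurable_funM.
  by apply: funext => z /=; rewrite exprS; move: (g z ^+ k) => w; case: (g z) => x y; case: w.
rewrite (_ : (fun z => _) = (fun z => complex.Re (g z)) \* (fun z => complex.Im (g z ^+ k))
   \+ (fun z => complex.Im (g z)) \* (fun z => complex.Re (g z ^+ k))).
  by apply: measurable_funD; apply: measurable_funM.
by apply: funext => z /=; rewrite exprS; move: (g z ^+ k) => w; case: (g z) => x y; case: w.
Qed.

Lemma meas_normc (C : set R) (g : R -> R[i]) : measurable C ->
  measurable_fun C (fun z => complex.Re (g z)) ->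
  measurable_fun C (fun z => complex.Im (g z)) ->
  measurable_fun C (fun z => ComplexField.Normc.normc (g z)).
Proof.
move=> mC mRe mIm.
rewrite (_ : (fun z => _) = Num.sqrt \o ((fun z => complex.Re (g z)) \* (fun z => complex.Re (g z))
   \+ (fun z => complex.Im (g z)) \* (fun z => complex.Im (g z)))).
  apply: measurableT_comp; first exact: (continuous_measurable_fun (@sqrt_continuous R)).
  by apply: measurable_funD; apply: measurable_funM.
by apply: funext => z /=; case: (g z) => x y.
Qed.

End Aux.

Theorem mainTheorem3 (R : realType) (d : nat)
  (mu : {charge set R -> \bar R}) (C : set R) (gpow : R -> R[i])
  (phi : nat -> R[i]) (a b : R) (gamma sigma : R -> 'rV[R]_d) :
  measurable C ->
  measurable_fun C (fun z => complex.Re (gpow z)) ->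
  measurable_fun C (fun z => complex.Im (gpow z)) ->
  (forall k : nat, phi k = charge_cint mu C (fun z => gpow z ^+ k)) ->
  (forall i : 'I_d, {within `[a, b], continuous (fun u => gamma u ord0 i)}) ->
  (forall i : 'I_d, bounded_variation a b (fun u => gamma u ord0 i)) ->
  (forall i : 'I_d, {within `[a, b], continuous (fun u => sigma u ord0 i)}) ->
  (forall i : 'I_d, bounded_variation a b (fun u => sigma u ord0 i)) ->
  (forall s t : R, s \in `[a, b] -> t \in `[a, b] ->
     (forall k : nat,
        (charge_absint mu C (fun z => ComplexField.Normc.normc (gpow z ^+ k)%R)
          < +oo)%E) /\
     (\sum_(0 <= k <oo)
        ((`| sig_dot gamma sigma a k s t |)%:E *
         charge_absint mu C (fun z => ComplexField.Normc.normc (gpow z ^+ k)%R))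
       < +oo)%E) ->
  forall s t : R, s \in `[a, b] -> t \in `[a, b] ->
    phi_kernel phi gamma sigma a s t =
    charge_cint mu C (fun z => sigK (gpow z) gamma sigma a s t).

Proof.
move=> mC mRe mIm phiE _ _ _ _ H s t hs ht.
have [H1 H2] := H s t hs ht.
have mP := @meas_pow R C gpow mC mRe mIm.
have mN k : measurable_fun C (fun z => ComplexField.Normc.normc (gpow z ^+ k)).
  by apply: meas_normc => //; case: (mP k).
rewrite /phi_kernel /csum /charge_cint.
congr (_ +i* _)%C.
  rewrite (_ : (fun z => complex.Re (sigK (gpow z) gamma sigma a s t)) =
     (fun z => limn (fun n => \sum_(0 <= k < n) complex.Re (gpow z ^+ k) *
                   sig_dot gamma sigma a k s t))); last first.
    apply: funext => z; rewrite /sigK /csum /=.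
    by under eq_fun => n do under eq_bigr => k _ do rewrite Re_mulC.
  rewrite -(@charge_series R _ _ mu C (fun k z => complex.Re (gpow z ^+ k))
    (fun k z => ComplexField.Normc.normc (gpow z ^+ k))
    (fun k => sig_dot gamma sigma a k s t) mC) //.
  - by under eq_fun => n do under eq_bigr => k _ do rewrite Re_mulC phiE.
  - by move=> k; case: (mP k).
  - by move=> k z _; exact: Re_le_normc.
rewrite (_ : (fun z => complex.Im (sigK (gpow z) gamma sigma a s t)) =
   (fun z => limn (fun n => \sum_(0 <= k < n) complex.Im (gpow z ^+ k) *
                 sig_dot gamma sigma a k s t))); last first.
  apply: funext => z; rewrite /sigK /csum /=.
  by under eq_fun => n do under eq_bigr => k _ do rewrite Im_mulC.
rewrite -(@charge_series R _ _ mu C (fun k z => complex.Im (gpow z ^+ k))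
  (fun k z => ComplexField.Normc.normc (gpow z ^+ k))
  (fun k => sig_dot gamma sigma a k s t) mC) //.
- by under eq_fun => n do under eq_bigr => k _ do rewrite Im_mulC phiE.
- by move=> k; case: (mP k).
- by move=> k z _; exact: Im_le_normc.
Qed.
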